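(* Suppose $F\in\mathcal{A}\setminus\{\delta_0\}$ is not aperiodic. Then there exist $m\in\{2,3,4,\dots\}$ and an aperiodic probability $\widetilde{F}\in\mathcal{A}$ such that $\mathrm{supp}(F)\subseteq\{0,m,2m,\dots\}$ and $F(km)=\widetilde{F}(k)$ for all $k\in\mathbb{Z}^+$.
   Context: $\mathbb{P}(\mathbb{Z}^+)$ is the set of functions $F:\mathbb{Z}\to[0,1]$ with $\sum_kF(k)=1$ and $F(k)=0$ for $k<0$; $\delta_m$ is the point mass at $m$; $F^{(n)}$ is the $n$-th convolution power. $\mathcal{A}=\{F\in\mathbb{P}(\mathbb{Z}^+):\sup_{n\in\mathbb{N}}n\sum_k|F^{(n)}(k)-F^{(n+1)}(k)|<\infty\}$. $F$ is adapted if $\mathrm{supp}(F)=\{k:F(k)\ne0\}$ generates the additive group $\mathbb{Z}$, and aperiodic if every translate $\delta_m*F$, $m\in\mathbb{Z}$, is adapted. *)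

(* Defs.v *)
From Stdlib Require Import Reals ZArith.
Open Scope R_scope.

Definition delta (m : Z) : Z -> R := fun k => if Z.eq_dec k m then 1 else 0.

Definition in_PZp (F : Z -> R) : Prop :=
  (forall k, 0 <= F k <= 1) /\
  (forall k, (k < 0)%Z -> F k = 0) /\
  infinite_sum (fun n : nat => F (Z.of_nat n)) 1.

Definition conv (F G : Z -> R) : Z -> R := fun k =>
  if Z.ltb k 0 then 0
  else sum_f_R0 (fun j : nat => F (Z.of_nat j) * G (k - Z.of_nat j)%Z) (Z.to_nat k).

Fixpoint conv_pow (F : Z -> R) (n : nat) : Z -> R :=
  match n with
  | O => delta 0
  | S n' => conv F (conv_pow F n')
  end.

(* The class A: sup_n n * sum_k |F^(n)(k) - F^(n+1)(k)| < infinity.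
   (Terms with k < 0 vanish; the series has nonnegative terms, so its
   value is the sup of its partial sums.) *)
Definition in_A (F : Z -> R) : Prop :=
  in_PZp F /\
  exists C : R, forall (n N : nat),
    INR n * sum_f_R0 (fun k : nat =>
      Rabs (conv_pow F n (Z.of_nat k) - conv_pow F (S n) (Z.of_nat k))) N <= C.

Inductive gen_subgroup (S : Z -> Prop) : Z -> Prop :=
  | gen_in : forall z, S z -> gen_subgroup S z
  | gen_zero : gen_subgroup S 0%Z
  | gen_add : forall a b, gen_subgroup S a -> gen_subgroup S b -> gen_subgroup S (a + b)%Z
  | gen_opp : forall a, gen_subgroup S a -> gen_subgroup S (- a)%Z.

Definition supp (F : Z -> R) : Z -> Prop := fun k => F k <> 0.

Definition adapted (F : Z -> R) : Prop := forall z : Z, gen_subgroup (supp F) z.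

(* translate delta_m * F : k |-> F (k - m) *)
Definition translate (m : Z) (F : Z -> R) : Z -> R := fun k => F (k - m)%Z.

Definition aperiodic (F : Z -> R) : Prop := forall m : Z, adapted (translate m F).

(* Main.v *)
Require Import Defs.
From Stdlib Require Import Reals ZArith Znumtheory Lia Lra Classical FunctionalExtensionality.
From Coquelicot Require Series.
Open Scope R_scope.

Lemma sum_zero (f : nat -> R) N : (forall i, (i <= N)%nat -> f i = 0) -> sum_f_R0 f N = 0.
Proof.
  induction N; intros H; simpl.
  - apply H; lia.
  - rewrite IHN by (intros; apply H; lia). rewrite H by lia. ring.
Qed.

Lemma sum_nonzero (f : nat -> R) N : sum_f_R0 f N <> 0 -> exists i, (i <= N)%nat /\ f i <> 0.
Proof.
  intros H. apply NNPP; intros H'. apply H, sum_zero. intros i Hi.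
  apply NNPP; intros Hf; apply H'; eauto.
Qed.

Lemma block_aux (h : nat -> R) d N : (1 <= d)%nat ->
  (forall i, (forall j, i <> (j * d)%nat) -> h i = 0) ->
  forall k, (k < d)%nat -> sum_f_R0 h (N * d + k) = sum_f_R0 h (N * d).
Proof.
  intros Hd Hh k. induction k; intros Hk.
  - now rewrite Nat.add_0_r.
  - rewrite Nat.add_succ_r. simpl. rewrite IHk by lia.
    rewrite (Hh (S (N * d + k))). ring.
    intros j Hj. destruct (Nat.le_gt_cases j N).
    + assert (j * d <= N * d)%nat by nia. lia.
    + assert (j * d >= N * d + d)%nat by nia. lia.
Qed.

Lemma block (h : nat -> R) d N : (1 <= d)%nat ->
  (forall i, (forall j, i <> (j * d)%nat) -> h i = 0) ->
  sum_f_R0 h (N * d) = sum_f_R0 (fun j => h (j * d)%nat) N.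
Proof.
  intros Hd Hh. induction N.
  - reflexivity.
  - replace (S N * d)%nat with (S (N * d + (d - 1)))%nat by nia.
    simpl. rewrite block_aux by (auto; lia). rewrite IHN.
    replace (S (N * d + (d - 1))) with (d + N * d)%nat by lia. reflexivity.
Qed.

Lemma conv_nat F G k : conv F G (Z.of_nat k) =
  sum_f_R0 (fun j => F (Z.of_nat j) * G (Z.of_nat (k - j))) k.
Proof.
  unfold conv. replace (Z.of_nat k <? 0)%Z with false by (symmetry; apply Z.ltb_ge; lia).
  rewrite Nat2Z.id. apply sum_eq. intros i Hi. rewrite Nat2Z.inj_sub by lia. reflexivity.
Qed.

Lemma conv_neg F G k : (k < 0)%Z -> conv F G k = 0.
Proof. intros H. unfold conv. now rewrite (proj2 (Z.ltb_lt _ _) H). Qed.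

Lemma conv_mass F G a b :
  (forall k, 0 <= F k) -> (forall k, 0 <= G k) ->
  infinite_sum (fun n => F (Z.of_nat n)) a ->
  infinite_sum (fun n => G (Z.of_nat n)) b ->
  infinite_sum (fun n => conv F G (Z.of_nat n)) (a * b).
Proof.
  intros HF HG Ha Hb. apply Series.is_series_Reals.
  apply Series.is_series_Reals in Ha. apply Series.is_series_Reals in Hb.
  pose proof (Series.is_series_mult _ _ _ _ Ha Hb) as H.
  eapply Series.is_series_ext; [|apply H].
  - intros n. simpl. rewrite conv_nat. reflexivity.
  - exists a. eapply Series.is_series_ext; [|apply Ha]. intros n; simpl.
    symmetry; apply Rabs_pos_eq; auto.
  - exists b. eapply Series.is_series_ext; [|apply Hb]. intros n; simpl.
    symmetry; apply Rabs_pos_eq; auto.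
Qed.

Lemma conv_nonneg F G : (forall k, 0 <= F k) -> (forall k, 0 <= G k) -> forall k, 0 <= conv F G k.
Proof.
  intros HF HG k. unfold conv. destruct (k <? 0)%Z. lra.
  apply cond_pos_sum. intros; apply Rmult_le_pos; auto.
Qed.

Lemma delta_nonneg k : 0 <= delta 0 k.
Proof. unfold delta; destruct Z.eq_dec; lra. Qed.

Lemma pow_nonneg F : (forall k, 0 <= F k) -> forall n k, 0 <= conv_pow F n k.
Proof.
  intros HF n; induction n; intros k; simpl.
  - apply delta_nonneg.
  - apply conv_nonneg; auto.
Qed.

Lemma delta_mass : infinite_sum (fun n => delta 0 (Z.of_nat n)) 1.
Proof.
  assert (H : forall N, sum_f_R0 (fun n => delta 0 (Z.of_nat n)) N = 1).
  { induction N; simpl. unfold delta; destruct Z.eq_dec; [lra|lia].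
    rewrite IHN. unfold delta; destruct Z.eq_dec; [lia|lra]. }
  intros e He. exists 0%nat. intros n _. rewrite H. unfold R_dist.
  rewrite Rminus_diag, Rabs_R0. lra.
Qed.

Lemma pow_mass F : in_PZp F -> forall n, infinite_sum (fun k => conv_pow F n (Z.of_nat k)) 1.
Proof.
  intros [H1 [H2 H3]] n. induction n; simpl.
  - apply delta_mass.
  - replace 1 with (1 * 1) by ring. apply conv_mass; auto.
    intros; apply H1. apply pow_nonneg. intros; apply H1.
Qed.

Lemma pow_supp F d a : (forall k, F k <> 0 -> (d | k + a)%Z) ->
  forall n k, conv_pow F n k <> 0 -> (d | k + Z.of_nat n * a)%Z.
Proof.
  intros HF n; induction n; intros k Hk; simpl in Hk.
  - unfold delta in Hk. destruct Z.eq_dec; [|lra]. subst. exists 0%Z. ring.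
  - unfold conv in Hk. destruct (Z.ltb_spec k 0); [lra|].
    apply sum_nonzero in Hk. destruct Hk as [j [Hj Hjn]].
    assert (A1 : F (Z.of_nat j) <> 0) by (intro E; apply Hjn; rewrite E; ring).
    assert (A2 : conv_pow F n (k - Z.of_nat j)%Z <> 0) by (intro E; apply Hjn; rewrite E; ring).
    apply HF in A1. apply IHn in A2.
    replace (k + Z.of_nat (S n) * a)%Z with ((Z.of_nat j + a) + (k - Z.of_nat j + Z.of_nat n * a))%Z by (rewrite Nat2Z.inj_succ; ring).
    now apply Z.divide_add_r.
Qed.

Section Scale.
Variable F : Z -> R.
Variable d : nat.
Hypothesis Hd : (1 <= d)%nat.
Hypothesis Hsupp : forall k, F k <> 0 -> (Z.of_nat d | k)%Z.
Let G := fun k => F (k * Z.of_nat d)%Z.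

Lemma div_nat i : (Z.of_nat d | Z.of_nat i)%Z -> exists j, i = (j * d)%nat.
Proof.
  intros [z Hz]. assert (0 <= z)%Z by nia. exists (Z.to_nat z).
  apply Nat2Z.inj. rewrite Nat2Z.inj_mul, Z2Nat.id; lia.
Qed.

Lemma zero_off (P : Z -> R) : (forall k, P k <> 0 -> (Z.of_nat d | k)%Z) ->
  forall i, (forall j, i <> (j * d)%nat) -> P (Z.of_nat i) = 0.
Proof.
  intros HP i Hi. apply NNPP; intros H. apply HP in H. apply div_nat in H.
  destruct H as [j Hj]. eapply Hi; eauto.
Qed.

Lemma scale_pow : forall n k, conv_pow G n k = conv_pow F n (k * Z.of_nat d)%Z.
Proof.
  intros n; induction n; intros k; simpl.
  - unfold delta. destruct (Z.eq_dec k 0); destruct (Z.eq_dec (k * Z.of_nat d) 0); auto; nia.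
  - destruct (Z_lt_le_dec k 0).
    + rewrite !conv_neg by nia. reflexivity.
    + rewrite <- (Z2Nat.id k) by lia. set (k' := Z.to_nat k).
      rewrite <- Nat2Z.inj_mul. rewrite !conv_nat.
      rewrite (block (fun i => F (Z.of_nat i) * conv_pow F n (Z.of_nat (k' * d - i)))) by
        (auto; intros i Hi; rewrite (zero_off F Hsupp i Hi); ring).
      apply sum_eq. intros j Hj. unfold G. rewrite IHn.
      rewrite <- !Nat2Z.inj_mul. rewrite Nat.mul_sub_distr_r. reflexivity.
Qed.

Lemma scale_PZp : in_PZp F -> in_PZp G.
Proof.
  intros [H1 [H2 H3]]. split; [|split].
  - intros k; apply H1.
  - intros k Hk; unfold G; apply H2; nia.
  - intros e He. destruct (H3 e He) as [N0 HN0]. exists N0. intros n Hn.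
    assert (E : sum_f_R0 (fun n => G (Z.of_nat n)) n = sum_f_R0 (fun n => F (Z.of_nat n)) (n * d)).
    { rewrite (block (fun i => F (Z.of_nat i))) by (auto; intros i Hi; apply (zero_off F Hsupp i Hi)).
      apply sum_eq. intros j _. unfold G. now rewrite Nat2Z.inj_mul. }
    rewrite E. apply HN0. nia.
Qed.

Lemma scale_A : in_A F -> in_A G.
Proof.
  intros [HP [C HC]]. split. now apply scale_PZp. exists C. intros n N.
  assert (Hs : forall m k, conv_pow F m k <> 0 -> (Z.of_nat d | k)%Z).
  { intros m k Hk. pose proof (pow_supp F (Z.of_nat d) 0 ltac:(intros; rewrite Z.add_0_r; auto) m k Hk).
    now rewrite Z.mul_0_r, Z.add_0_r in H. }
  specialize (HC n (N * d)%nat).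
  rewrite (block (fun k => Rabs (conv_pow F n (Z.of_nat k) - conv_pow F (S n) (Z.of_nat k)))) in HC.
  - eapply Rle_trans; [|apply HC]. right. f_equal. apply sum_eq. intros j _.
    rewrite !scale_pow, Nat2Z.inj_mul. reflexivity.
  - auto.
  - intros i Hi. rewrite (zero_off _ (Hs n) i Hi), (zero_off _ (Hs (S n)) i Hi).
    rewrite Rminus_diag; apply Rabs_R0.
Qed.
End Scale.

Lemma gen_mul_nat S x : gen_subgroup S x -> forall n, gen_subgroup S (Z.of_nat n * x)%Z.
Proof.
  intros Hx n; induction n.
  - apply gen_zero.
  - rewrite Nat2Z.inj_succ. replace ((Z.succ (Z.of_nat n)) * x)%Z with (x + Z.of_nat n * x)%Z by ring.
    now apply gen_add.
Qed.

Lemma gen_mul S x : gen_subgroup S x -> forall q, gen_subgroup S (q * x)%Z.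
Proof.
  intros Hx q. destruct (Z_le_gt_dec 0 q).
  - rewrite <- (Z2Nat.id q) by lia. now apply gen_mul_nat.
  - replace (q * x)%Z with (- (Z.of_nat (Z.to_nat (- q)) * x))%Z by (rewrite Z2Nat.id; lia).
    apply gen_opp. now apply gen_mul_nat.
Qed.

Lemma least_pos (P : Z -> Prop) : (exists x, (0 < x)%Z /\ P x) ->
  exists d, (0 < d)%Z /\ P d /\ forall y, (0 < y)%Z -> P y -> (d <= y)%Z.
Proof.
  intros [x [Hx Px]].
  assert (H : forall n x, (Z.to_nat x <= n)%nat -> (0 < x)%Z -> P x ->
    exists d, (0 < d)%Z /\ P d /\ forall y, (0 < y)%Z -> P y -> (d <= y)%Z).
  { intros n; induction n; intros z Hz1 Hz2 Pz.
    - lia.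
    - destruct (classic (exists y, (0 < y < z)%Z /\ P y)) as [[y [Hy Py]]|Hn].
      + apply (IHn y); auto; lia.
      + exists z. split; auto. split; auto. intros y Hy Py.
        destruct (Z_le_gt_dec z y); auto. exfalso; apply Hn. exists y; split; auto; lia. }
  eapply H; eauto.
Qed.

Lemma sub_struct S : ~ (forall z, gen_subgroup S z) ->
  exists d, (d = 0 \/ 2 <= d)%Z /\ forall k, S k -> (d | k)%Z.
Proof.
  intros Hn. destruct (classic (exists x, (0 < x)%Z /\ gen_subgroup S x)) as [Hex|Hno].
  - destruct (least_pos _ Hex) as [d [Hd [Pd Hmin]]]. exists d. split.
    + destruct (Z.eq_dec d 1). subst. exfalso. apply Hn. intros z.
      replace z with (z * 1)%Z by ring. now apply gen_mul. lia.
    + intros k Hk. apply Z.mod_divide. lia.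
      assert (Hb := Z.mod_pos_bound k d Hd).
      assert (Hg : gen_subgroup S (k mod d)).
      { rewrite Z.mod_eq by lia. replace (k - d * (k / d))%Z with (k + (- (k / d)) * d)%Z by ring.
        apply gen_add. now apply gen_in. now apply gen_mul. }
      destruct (Z.eq_dec (k mod d) 0); auto. specialize (Hmin (k mod d)%Z ltac:(lia) Hg). lia.
  - exists 0%Z. split. now left. intros k Hk. exists 0%Z.
    destruct (Z.lt_trichotomy k 0) as [H|[H|H]].
    + exfalso. apply Hno. exists (- k)%Z. split. lia. apply gen_opp, gen_in, Hk.
    + lia.
    + exfalso. apply Hno. exists k. split. lia. apply gen_in, Hk.
Qed.

Lemma case2 F d a : in_A F -> (forall k, F k <> 0 -> (d | k + a)%Z) -> ~ (d | a)%Z -> False.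
Proof.
  intros [HP [C HC]] Hs Hna.
  assert (Hdis : forall n k, conv_pow F n k = 0 \/ conv_pow F (S n) k = 0).
  { intros n k. apply NNPP; intros H. apply not_or_and in H. destruct H as [H1 H2].
    apply (pow_supp F d a Hs) in H1. apply (pow_supp F d a Hs) in H2. apply Hna.
    replace a with ((k + Z.of_nat (S n) * a) - (k + Z.of_nat n * a))%Z by (rewrite Nat2Z.inj_succ; ring).
    now apply Z.divide_sub_r. }
  assert (Hnn := pow_nonneg F (fun k => proj1 (proj1 HP k))).
  destruct (archimed (2 * Rabs C + 2)) as [Ha _].
  set (n := Z.to_nat (up (2 * Rabs C + 2))).
  assert (Hn : INR n > 2 * Rabs C + 2).
  { unfold n. rewrite INR_IZR_INZ, Z2Nat.id. lra.
    apply le_IZR. pose proof (Rabs_pos C). lra. }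
  destruct (pow_mass F HP n (1/2) ltac:(lra)) as [N HN]. specialize (HN N (le_n _)).
  unfold R_dist in HN. apply Rabs_def2 in HN.
  specialize (HC n N).
  assert (Hge : sum_f_R0 (fun k => conv_pow F n (Z.of_nat k)) N <=
     sum_f_R0 (fun k => Rabs (conv_pow F n (Z.of_nat k) - conv_pow F (S n) (Z.of_nat k))) N).
  { apply sum_Rle. intros k _. destruct (Hdis n (Z.of_nat k)) as [E|E]; rewrite E.
    - apply Rabs_pos.
    - rewrite Rminus_0_r, Rabs_pos_eq; auto. lra. }
  pose proof (Rle_abs C). pose proof (pos_INR n).
  assert (INR n * (1/2) <= INR n * sum_f_R0 (fun k => conv_pow F n (Z.of_nat k)) N)
    by (apply Rmult_le_compat_l; lra).
  assert (INR n * sum_f_R0 (fun k => conv_pow F n (Z.of_nat k)) N <= C).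
  { eapply Rle_trans; [|apply HC]. apply Rmult_le_compat_l; lra. }
  lra.
Qed.

Lemma main_ind : forall n F, in_A F -> (exists s, (0 < s <= Z.of_nat n)%Z /\ F s <> 0) ->
  exists (m : nat) (Ft : Z -> R),
    (1 <= m)%nat /\ in_A Ft /\ aperiodic Ft /\
    (forall k : Z, supp F k -> exists j : nat, k = (Z.of_nat j * Z.of_nat m)%Z) /\
    (forall k : nat, F (Z.of_nat k * Z.of_nat m)%Z = Ft (Z.of_nat k)).
Proof.
  induction n; intros F HA [s [Hs Fs]].
  - lia.
  - destruct (classic (aperiodic F)) as [Hap|Hap].
    + exists 1%nat, F. split; [lia|]. split; auto. split; auto. split.
      * intros k Hk. assert (0 <= k)%Z.
        { destruct (Z_le_gt_dec 0 k); auto. exfalso. apply Hk.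
          destruct HA as [[_ [H2 _]] _]. apply H2; lia. }
        exists (Z.to_nat k). rewrite Z2Nat.id; lia.
      * intros k. now rewrite Z.mul_1_r.
    + unfold aperiodic in Hap. apply not_all_ex_not in Hap. destruct Hap as [m0 Hm0].
      destruct (sub_struct _ Hm0) as [d [Hd Hdk]].
      assert (Hs' : forall k, F k <> 0 -> (d | k + m0)%Z).
      { intros k Hk. apply Hdk. unfold supp, translate. now replace (k + m0 - m0)%Z with k by ring. }
      destruct (Zdivide_dec d m0) as [Hdm|Hdm].
      2: { exfalso. exact (case2 F d m0 HA Hs' Hdm). }
      assert (Hsd : forall k, F k <> 0 -> (d | k)%Z).
      { intros k Hk. replace k with ((k + m0) - m0)%Z by ring. apply Z.divide_sub_r; auto. }
      assert (Hd2 : (2 <= d)%Z).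
      { destruct Hd as [Hd|Hd]; auto. subst. destruct (Hsd s Fs) as [z Hz]. lia. }
      set (dn := Z.to_nat d).
      assert (Ed : Z.of_nat dn = d) by (unfold dn; rewrite Z2Nat.id; lia).
      assert (Hsd' : forall k, F k <> 0 -> (Z.of_nat dn | k)%Z) by (rewrite Ed; auto).
      assert (Hdn : (1 <= dn)%nat) by lia.
      pose proof (scale_A F dn Hdn Hsd' HA) as HAG.
      destruct (Hsd s Fs) as [s' Hs'e].
      destruct (IHn _ HAG) as [m' [Gt [Hm' [HGt [HapG [HsG HeqG]]]]]].
      { exists s'. split; [nia|]. rewrite Ed, <- Hs'e. auto. }
      exists (dn * m')%nat, Gt. split; [nia|]. split; auto. split; auto. split.
      * intros k Hk. destruct (Hsd k Hk) as [j0 Hj0].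
        assert (HG : supp (fun k => F (k * Z.of_nat dn)%Z) j0).
        { unfold supp. rewrite Ed, <- Hj0. exact Hk. }
        destruct (HsG j0 HG) as [j Hj]. exists j. rewrite Hj0, Hj, Nat2Z.inj_mul, Ed. ring.
      * intros k. rewrite <- HeqG. f_equal. rewrite Nat2Z.inj_mul. ring.
Qed.

Lemma sum_only0 (f : nat -> R) N : (forall i, (1 <= i)%nat -> f i = 0) -> sum_f_R0 f N = f 0%nat.
Proof.
  intros H. induction N; simpl; auto. rewrite IHN, (H (S N)) by lia. ring.
Qed.

Theorem lemma4p3 (F : Z -> R) :
  in_A F -> F <> delta 0 -> ~ aperiodic F ->
  exists (m : nat) (Ft : Z -> R),
    (2 <= m)%nat /\ in_A Ft /\ aperiodic Ft /\
    (forall k : Z, supp F k -> exists j : nat, k = (Z.of_nat j * Z.of_nat m)%Z) /\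
    (forall k : nat, F (Z.of_nat k * Z.of_nat m)%Z = Ft (Z.of_nat k)).
Proof.
  intros HA Hnd Hnap.
  assert (Hex : exists s, (0 < s)%Z /\ F s <> 0).
  { apply NNPP; intros Hno. apply Hnd. destruct HA as [[H1 [H2 H3]] _].
    assert (Hz : forall k, k <> 0%Z -> F k = 0).
    { intros k Hk. destruct (Z_lt_le_dec k 0). auto.
      apply NNPP; intros Hf. apply Hno. exists k. split; auto; lia. }
    assert (H0 : F 0%Z = 1).
    { apply (uniqueness_sum (fun n => F (Z.of_nat n))); auto.
      intros e He. exists 0%nat. intros n _. rewrite sum_only0.
      - simpl. unfold R_dist. rewrite Rminus_diag, Rabs_R0. lra.
      - intros i Hi. apply Hz. lia. }
    apply functional_extensionality. intros k. unfold delta. destruct Z.eq_dec.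
    subst; auto. auto. }
  destruct Hex as [s [Hs Fs]].
  destruct (main_ind (Z.to_nat s) F HA ltac:(exists s; split; [lia| auto]))
    as [m [Ft [Hm [HAt [Hapt [Hsu Heq]]]]]].
  exists m, Ft. split; [|auto].
  destruct (Nat.eq_dec m 1); [|lia]. subst. exfalso. apply Hnap.
  replace F with Ft; auto. apply functional_extensionality. intros k.
  destruct (Z_lt_le_dec k 0).
  - destruct HA as [[_ [H2 _]] _]. destruct HAt as [[_ [H2' _]] _]. rewrite H2, H2'; auto.
  - rewrite <- (Z2Nat.id k) by lia. rewrite <- Heq. now rewrite Z.mul_1_r.
Qed.
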